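(* Let $n,m$ be positive integers, $\mathbf{A}_c\in\mathbb{Q}^{m\times 2n}$, $\mathbf b_c\in\mathbb{Q}^m$, and let $c[\bar x,\bar x']$ be the linear constraint $\mathbf{A}_c\langle\mathbf x,\mathbf x'\rangle\ge\mathbf b_c$, assumed satisfiable over $\mathbb{Q}^{2n}$. Consider the binary $\mathrm{CLP}(\mathbb{Q})$ clause $C$: $p(\bar x)\mathrel{:-}c[\bar x,\bar x'],\,p(\bar x')$ with $p$ an $n$-ary predicate. For $\tilde{\boldsymbol\mu}=\langle\mu_0,\boldsymbol\mu\rangle\in\mathbb{Q}^{n+1}$ with $\boldsymbol\mu=\langle\mu_1,\dots,\mu_n\rangle$, define $$\mathrm{lrf}(C)=\Bigl\{\tilde{\boldsymbol\mu}\in\mathbb{Q}^{n+1}\;\Bigm|\;\forall\bar x,\bar x'\in\mathbb{Q}^n:\ c[\bar x,\bar x']\implies \sum_{i=1}^n\mu_ix_i-\sum_{i=1}^n\mu_ix'_i\ge1\ \wedge\ \mu_0+\sum_{i=1}^n\mu_ix_i\ge0\Bigr\}.$$ Let $\tilde{\mathbf A}_c\in\mathbb{Q}^{(m+2)\times(2n+1)}$ be the matrix with rows $(1,\mathbf 0)$, $(-1,\mathbf 0)$ followed by the block $(\mathbf 0\ \ \mathbf A_c)$ (so it encodes the extra constraint $x_0=1$ on an extra first variable $x_0$), and $\tilde{\mathbf b}_c=\langle 1,-1,\mathbf b_c\rangle\in\mathbb{Q}^{m+2}$. Let $\mathrm{ms}(C)$ be the set of all $\tilde{\boldsymbol\mu}=\langle\mu_0,\boldsymbol\mu\rangle\in\mathbb{Q}^{n+1}$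 for which there exist $\mathbf y\in\mathbb{Q}^m$ and $\mathbf z\in\mathbb{Q}^{m+2}$ with $$\mathbf y\ge\mathbf 0,\quad \mathbf A_c^{\mathrm T}\mathbf y=\langle\boldsymbol\mu,-\boldsymbol\mu\rangle,\quad \mathbf b_c^{\mathrm T}\mathbf y\ge1,$$ $$\mathbf z\ge\mathbf 0,\quad \tilde{\mathbf A}_c^{\mathrm T}\mathbf z=\langle\tilde{\boldsymbol\mu},\mathbf 0\rangle\ (\mathbf 0\in\mathbb{Q}^n),\quad \tilde{\mathbf b}_c^{\mathrm T}\mathbf z\ge0.$$ Then $\mathrm{lrf}(C)=\mathrm{ms}(C)$.
   Context: $\langle\mathbf v,\mathbf w\rangle$ denotes concatenation of column vectors; vector (in)equalities are componentwise; $\mathbf x=\langle x_1,\dots,x_n\rangle$, $\mathbf x'=\langle x'_1,\dots,x'_n\rangle$, and the constraint $c[\bar x,\bar x']$ is identified with $\mathbf A_c\langle\mathbf x,\mathbf x'\rangle\ge\mathbf b_c$. *)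

(* Defs.v *)
From mathcomp Require Import all_boot all_order all_algebra.
Set Implicit Arguments. Unset Strict Implicit. Unset Printing Implicit Defensive.
Import Order.TTheory GRing.Theory Num.Theory.
Local Open Scope ring_scope.

Definition cvle (k : nat) (u v : 'cV[rat]_k) : Prop := forall i, u i 0 <= v i 0.

Definition constr (n m : nat) (A : 'M[rat]_(m, n + n)) (b : 'cV[rat]_m)
  (x x' : 'cV[rat]_n) : Prop := cvle b (A *m col_mx x x').

Definition mu0_of (n : nat) (mut : 'cV[rat]_(1 + n)) : rat := (usubmx mut) 0 0.
Definition mu_of (n : nat) (mut : 'cV[rat]_(1 + n)) : 'cV[rat]_n := dsubmx mut.

Definition lrf (n m : nat) (A : 'M[rat]_(m, n + n)) (b : 'cV[rat]_m)
  (mut : 'cV[rat]_(1 + n)) : Prop :=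
  forall x x' : 'cV[rat]_n, constr A b x x' ->
    (\sum_(i < n) mu_of mut i 0 * x i 0) - (\sum_(i < n) mu_of mut i 0 * x' i 0) >= 1
    /\ mu0_of mut + \sum_(i < n) mu_of mut i 0 * x i 0 >= 0.

Definition Atil (n m : nat) (A : 'M[rat]_(m, n + n)) : 'M[rat]_(2 + m, 1 + (n + n)) :=
  block_mx (col_mx (1 : 'M[rat]_1) (- 1 : 'M[rat]_1)) 0 0 A.
Definition btil (m : nat) (b : 'cV[rat]_m) : 'cV[rat]_(2 + m) :=
  col_mx (col_mx (1 : 'M[rat]_1) (- 1 : 'M[rat]_1)) b.

Definition ms (n m : nat) (A : 'M[rat]_(m, n + n)) (b : 'cV[rat]_m)
  (mut : 'cV[rat]_(1 + n)) : Prop :=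
  exists (y : 'cV[rat]_m) (z : 'cV[rat]_(2 + m)),
    [/\ cvle 0 y, A^T *m y = col_mx (mu_of mut) (- mu_of mut) & (b^T *m y) 0 0 >= 1]
    /\ [/\ cvle 0 z, (Atil A)^T *m z = col_mx mut (0 : 'cV[rat]_n) &
        ((btil b)^T *m z) 0 0 >= 0].

(* Main.v *)
Require Import Defs.
From mathcomp Require Import all_boot all_order all_algebra.
From mathcomp Require Import ring lra.
Set Implicit Arguments. Unset Strict Implicit. Unset Printing Implicit Defensive.
Import Order.TTheory GRing.Theory Num.Theory.
Local Open Scope ring_scope.

Lemma sum_swap (I J : finType) (c : I -> rat) (g : I -> J -> rat) (h : J -> rat) :
  \sum_j (\sum_i c i * g i j) * h j = \sum_i c i * (\sum_j g i j * h j).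
Proof.
under eq_bigr do rewrite mulr_suml.
rewrite exchange_big; apply: eq_bigr => i _; rewrite mulr_sumr.
by apply: eq_bigr => j _; rewrite mulrA.
Qed.

Lemma sum_if_eq (I : finType) (p : I) (c : rat) (f : I -> rat) :
  \sum_i (if i == p then c else 0) * f i = c * f p.
Proof.
rewrite (bigD1 p) //= eqxx big1 ?addr0 // => i /negbTE ->; by rewrite mul0r.
Qed.

Lemma bounds (I : finType) (P N : pred I) (L U : I -> rat) :
  (forall p q, P p -> N q -> L p <= U q) ->
  exists x0, (forall p, P p -> L p <= x0) /\ (forall q, N q -> x0 <= U q).
Proof.
move=> H; case: (pickP P) => [p0 Hp0|noP].
  exists (\big[Num.max/L p0]_(p | P p) L p); split.
    by move=> p Pp; rewrite (bigD1 p) //= le_max lexx.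
  move=> q Nq; apply: (big_ind (fun v => v <= U q)); first exact: H.
    by move=> u v hu hv; rewrite ge_max hu hv.
  by move=> p Pp; exact: H.
exists (\big[Num.min/0]_(q | N q) U q); split.
  by move=> p; rewrite noP.
by move=> q Nq; rewrite (bigD1 q) //= ge_min lexx.
Qed.

Definition ext k (t : rat) (f : 'I_k -> rat) : 'I_k.+1 -> rat :=
  fun j => if unlift ord0 j is Some j' then f j' else t.
Lemma ext0 k t (f : 'I_k -> rat) : ext t f ord0 = t.
Proof. by rewrite /ext unlift_none. Qed.
Lemma extS k t (f : 'I_k -> rat) j : ext t f (lift ord0 j) = f j.
Proof. by rewrite /ext liftK. Qed.

Definition feas k (I : finType) (a : I -> 'I_k -> rat) (b : I -> rat) :=
  exists x : 'I_k -> rat, forall i, b i <= \sum_j a i j * x j.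

Lemma fm k : forall (I : finType) (a : I -> 'I_k -> rat) (b : I -> rat),
  ~ feas a b ->
  exists y : I -> rat, (forall i, 0 <= y i) /\ (forall j, \sum_i y i * a i j = 0)
    /\ 0 < \sum_i y i * b i.
Proof.
elim: k => [|k IH] I a b nf.
  case: (pickP (fun i => 0 < b i)) => [i0 Hi0|nob].
    exists (fun i => if i == i0 then 1 else 0); split; first by move=> i; case: ifP.
    split; first by move=> [].
    by rewrite sum_if_eq mul1r.
  exfalso; apply: nf; exists (fun _ => 0) => i.
  by rewrite big_ord0 leNgt nob.
pose P i := 0 < a i ord0; pose N i := a i ord0 < 0.
pose mu (j : ((I * I) + I)%type) (i : I) : rat :=
  match j with
  | inl (p, q) => if P p && N q then
      (if i == p then - a q ord0 else 0) + (if i == q then a p ord0 else 0) else 0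
  | inr r => if a r ord0 == 0 then (if i == r then 1 else 0) else 0 end.
have mu_ge0 j i : 0 <= mu j i.
  case: j => [[p q]|r] /=.
    case: ifP => // /andP [Pp Nq]; apply: addr_ge0; case: ifP => //= _.
      by rewrite oppr_ge0 ltW.
    by rewrite ltW.
  by case: ifP => // _; case: ifP.
have mu_col0 j : \sum_i mu j i * a i ord0 = 0.
  case: j => [[p q]|r] /=.
    case: (P p && N q); last by rewrite big1 // => i _; rewrite mul0r.
    under eq_bigr do rewrite mulrDl.
    rewrite big_split /= !sum_if_eq; ring.
  case: eqP => [h|_]; last by rewrite big1 // => i _; rewrite mul0r.
  by rewrite sum_if_eq h mulr0.
pose a' j j' := \sum_i mu j i * a i (lift ord0 j').
pose b' j := \sum_i mu j i * b i.
have nf' : ~ feas a' b'.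
  move=> [x' hx'].
  pose r i := \sum_j' a i (lift ord0 j') * x' j'.
  have hr j : \sum_i mu j i * b i <= \sum_i mu j i * r i.
    by have := hx' j; rewrite /b' /a' sum_swap.
  pose L p := (b p - r p) / a p ord0.
  pose U q := (r q - b q) / (- a q ord0).
  have [x0 [hL hU]] : exists x0, (forall p, P p -> L p <= x0) /\ (forall q, N q -> x0 <= U q).
    apply: bounds => p q Pp Nq.
    have := hr (inl (p, q)); rewrite /= Pp Nq /=.
    under eq_bigr do rewrite mulrDl; under [X in _ <= X]eq_bigr do rewrite mulrDl.
    rewrite !big_split /= !sum_if_eq => h.
    have Nq' : 0 < - a q ord0 by rewrite oppr_gt0.
    rewrite /L /U ler_pdivlMr // mulrAC ler_pdivrMr //.
    rewrite /P in Pp; lra.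
  apply: nf; exists (ext x0 x') => i.
  rewrite big_ord_recl ext0; under eq_bigr do rewrite extS.
  rewrite -/(r i).
  case: (ltgtP (a i ord0) 0) => hai.
  - have := hU i hai; rewrite /U ler_pdivlMr ?oppr_gt0 //; lra.
  - have := hL i hai; rewrite /L ler_pdivrMr //; lra.
  - have := hr (inr i); rewrite /= hai eqxx !sum_if_eq !mul1r; lra.
have [y' [hy0 [hycol hyb]]] := IH _ a' b' nf'.
exists (fun i => \sum_j y' j * mu j i); split.
  by move=> i; apply: sumr_ge0 => j _; apply: mulr_ge0.
split; last by rewrite sum_swap.
move=> j; case: (unliftP ord0 j) => [j'|] ->; rewrite sum_swap.
  exact: hycol.
by rewrite big1 // => j0 _; rewrite mu_col0 mulr0.
Qed.

Lemma farkas_aff k (I : finType) (a : I -> 'I_k -> rat) (b : I -> rat)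
  (c : 'I_k -> rat) (d : rat) :
  feas a b ->
  (forall x, (forall i, b i <= \sum_j a i j * x j) -> d <= \sum_j c j * x j) ->
  exists y : I -> rat, (forall i, 0 <= y i) /\ (forall j, \sum_i y i * a i j = c j)
    /\ d <= \sum_i y i * b i.
Proof.
move=> [xb hxb] himp.
pose a' (i : (I + bool)%type) : 'I_k.+1 -> rat :=
  match i with
  | inl i => ext (- b i) (a i)
  | inr true => ext 1 (fun _ => 0)
  | inr false => ext d (fun j => - c j) end.
pose b' (i : (I + bool)%type) : rat :=
  match i with inr false => 1 | _ => 0 end.
have nf : ~ feas a' b'.
  move=> [X hX].
  pose t := X ord0; pose x j := X (lift ord0 j).
  have ex u (g : 'I_k -> rat) : \sum_j ext u g j * X j = u * t + \sum_j g j * x j.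
    by rewrite big_ord_recl ext0; under eq_bigr do rewrite extS.
  have hA i : b i * t <= \sum_j a i j * x j.
    by have := hX (inl i); rewrite /= ex; lra.
  have ht : 0 <= t.
    have := hX (inr true); rewrite /= ex big1 ?addr0 ?mul1r // => j _; by rewrite mul0r.
  have hc : 1 <= d * t - \sum_j c j * x j.
    have := hX (inr false); rewrite /= ex.
    have -> : \sum_j (fun j => - c j) j * x j = - \sum_j c j * x j.
      by rewrite -sumrN; apply: eq_bigr => j _; rewrite mulNr.
    lra.
  have lin (f g : 'I_k -> rat) (s : rat) (h : 'I_k -> rat) :
    \sum_j f j * (g j + s * h j) = \sum_j f j * g j + s * \sum_j f j * h j.
    rewrite mulr_sumr -big_split /=; apply: eq_bigr => j _ /=; ring.
  have dv (f : 'I_k -> rat) : \sum_j f j * (x j / t) = (\sum_j f j * x j) / t.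
    by rewrite mulr_suml; apply: eq_bigr => j _; rewrite mulrA.
  case: (ltgtP t 0) => ht'.
  - lra.
  - have feas' : forall i, b i <= \sum_j a i j * (x j / t).
      by move=> i; rewrite dv ler_pdivlMr.
    have := himp _ feas'; rewrite dv ler_pdivlMr //; lra.
  - pose s := `|\sum_j c j * xb j - d| + 1.
    have hs : 1 <= s by rewrite /s lerDr normr_ge0.
    have hn := ler_norm (\sum_j c j * xb j - d).
    have h1 : s * (\sum_j c j * x j) <= s * (-1).
      by rewrite ler_wpM2l //; [lra | rewrite ht' mulr0 in hc; lra].
    have feas' : forall i, b i <= \sum_j a i j * (xb j + s * x j).
      move=> i; rewrite lin; have := hA i; rewrite ht' mulr0 => h2.
      have := hxb i; have : 0 <= s * \sum_j a i j * x j by apply: mulr_ge0 => //; lra.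
      lra.
    have := himp _ feas'; rewrite lin; have hsd : s = `|\sum_j c j * xb j - d| + 1 by []; lra.
have [y [hy0 [hycol hyb]]] := fm nf.
have hyf : 0 < y (inr false).
  move: hyb; rewrite big_sumType big_bool /= big1 ?add0r; last by move=> i _; rewrite mulr0.
  by rewrite mulr0 add0r mulr1.
exists (fun i => y (inl i) / y (inr false)); split.
  by move=> i; apply: divr_ge0 => //; exact: ltW.
split.
  move=> j; have := hycol (lift ord0 j).
  rewrite big_sumType big_bool /= !extS.
  under eq_bigr do rewrite extS.
  rewrite mulr0 add0r => h.
  have -> : \sum_i y (inl i) / y (inr false) * a i j = (\sum_i y (inl i) * a i j) / y (inr false).
    by rewrite mulr_suml; apply: eq_bigr => i _; rewrite mulrAC.
  have -> : \sum_i y (inl i) * a i j = c j * y (inr false) by lra.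
  by rewrite mulfK // lt0r_neq0.
have := hycol ord0.
rewrite big_sumType big_bool /= !ext0.
under eq_bigr do rewrite ext0.
move=> h.
have -> : \sum_i y (inl i) / y (inr false) * b i = (\sum_i y (inl i) * b i) / y (inr false).
  by rewrite mulr_suml; apply: eq_bigr => i _; rewrite mulrAC.
rewrite ler_pdivlMr //.
have -> : \sum_i y (inl i) * b i = - \sum_i y (inl i) * - b i.
  by rewrite -sumrN; apply: eq_bigr => i _; rewrite mulrN opprK.
have := hy0 (inr true); lra.
Qed.

Lemma colA1 n (u : 'cV[rat]_1) (d e : 'cV[rat]_n) :
  col_mx u (col_mx d e) = col_mx (col_mx u d) e :> 'cV_(1 + (n + n)).
Proof.
rewrite col_mxA; apply/matrixP => i j; rewrite castmxE /=.
by congr (col_mx _ _ _ _); apply: val_inj.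
Qed.

Lemma dual_ineq m k (A : 'M[rat]_(m, k)) (b : 'cV_m) (y : 'cV_m) (v : 'cV_k) :
  cvle 0 y -> cvle b (A *m v) -> (b^T *m y) 0 0 <= ((A^T *m y)^T *m v) 0 0.
Proof.
move=> hy hb; rewrite trmx_mul trmxK -mulmxA; move: hb; set Av := A *m v => hb.
rewrite !mxE; apply: ler_sum => i _; rewrite !mxE mulrC ler_wpM2l //.
  by have := hy i; rewrite mxE.
by have := hb i; rewrite mxE.
Qed.

Lemma mul_cc n (p q x x' : 'cV[rat]_n) :
  ((col_mx p q)^T *m col_mx x x') 0 0 =
  \sum_(i < n) p i 0 * x i 0 + \sum_(i < n) q i 0 * x' i 0.
Proof.
rewrite tr_col_mx mul_row_col !mxE; congr (_ + _); apply: eq_bigr => i _; by rewrite mxE.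
Qed.

Lemma Atil_mul n m (A : 'M[rat]_(m, n + n)) (z12 : 'cV[rat]_(1 + 1)) (w : 'cV_m) :
  (Atil A)^T *m col_mx z12 w = col_mx (usubmx z12 - dsubmx z12) (A^T *m w).
Proof.
rewrite /Atil tr_block_mx mul_block_col !trmx0 !mul0mx addr0 add0r.
congr col_mx; rewrite (tr_col_mx (1 : 'M[rat]_1) (-1)) -[z12 in LHS]vsubmxK (mul_row_col (1^T : 'M[rat]_1) (- 1 : 'M[rat]_1)^T) trmx1.
rewrite mul1mx; congr (_ + _); apply/matrixP => i j; rewrite !ord1 !mxE big_ord1 !mxE /=. by rewrite mulN1r.
Qed.

Lemma btil_mul m (b : 'cV[rat]_m) (z12 : 'cV[rat]_(1 + 1)) (w : 'cV_m) :
  ((btil b)^T *m col_mx z12 w) 0 0 = usubmx z12 0 0 - dsubmx z12 0 0 + (b^T *m w) 0 0.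
Proof.
rewrite /btil (tr_col_mx (col_mx (1 : 'M[rat]_1) (-1)) b) mul_row_col.
rewrite (tr_col_mx (1 : 'M[rat]_1) (-1)) -[z12 in LHS]vsubmxK.
rewrite (mul_row_col (1^T : 'M[rat]_1) (- 1 : 'M[rat]_1)^T) trmx1 mul1mx.
rewrite [in LHS]mxE [X in X + _ = _]mxE; congr (_ + _ + _).
by rewrite !mxE big_ord1 !mxE mulN1r.
Qed.

Lemma maxdiff (a : rat) : (if 0 <= a then a else 0) - (if 0 <= a then 0 else - a) = a.
Proof. by case: ifP => _; ring. Qed.

Theorem theorem2 (n m : nat) (hn : (0 < n)%N) (hm : (0 < m)%N)
  (A : 'M[rat]_(m, n + n)) (b : 'cV[rat]_m)
  (hsat : exists x x' : 'cV[rat]_n, constr A b x x') :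
  forall mut : 'cV[rat]_(1 + n), lrf A b mut <-> ms A b mut.
Proof.
move=> mut; rewrite /lrf /ms /mu0_of /mu_of.
set mu := dsubmx mut; set mu0 := usubmx mut 0 0.
split.
- move=> H.
  have [x0 [x0' hc0]] := hsat.
  have feasA : feas (fun i j => A i j) (fun i => b i 0).
    by exists (fun j => col_mx x0 x0' j 0) => i; have := hc0 i; rewrite mxE.
  have build : forall v : 'I_(n + n) -> rat, (forall i, b i 0 <= \sum_j A i j * v j) ->
     exists xx xx' : 'cV[rat]_n, [/\ constr A b xx xx', (forall i, xx i 0 = v (lshift n i))
        & (forall i, xx' i 0 = v (rshift n i))].
    move=> v hv; exists (\col_i v (lshift n i)), (\col_i v (rshift n i)).
    split; try by move=> i; rewrite mxE.
    rewrite /constr.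
    have -> : col_mx (\col_i v (lshift n i)) (\col_i v (rshift n i)) = \col_j v j.
      by rewrite -[\col_j v j]vsubmxK; congr col_mx; apply/matrixP => i k; rewrite !mxE.
    by move=> i; rewrite mxE; under eq_bigr do rewrite mxE; exact: hv.
  have imp1 : forall v : 'I_(n + n) -> rat, (forall i, b i 0 <= \sum_j A i j * v j) ->
      1 <= \sum_j col_mx mu (-mu) j 0 * v j.
    move=> v hv.
    have [xx [xx' [hc e1 e2]]] := build v hv; have [h1 _] := H xx xx' hc.
    rewrite big_split_ord /=; under eq_bigr do rewrite col_mxEu.
    under [X in _ + X]eq_bigr do rewrite col_mxEd mxE mulNr.
    rewrite sumrN.
    have -> : \sum_i mu i 0 * v (lshift n i) = \sum_i mu i 0 * xx i 0.
      by apply: eq_bigr => i _; rewrite e1.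
    have -> : \sum_i mu i 0 * v (rshift n i) = \sum_i mu i 0 * xx' i 0.
      by apply: eq_bigr => i _; rewrite e2.
    by [].
  have [y [hy0 [hyc hyb]]] := farkas_aff feasA imp1.
  have imp2 : forall v : 'I_(n + n) -> rat, (forall i, b i 0 <= \sum_j A i j * v j) ->
      - mu0 <= \sum_j col_mx mu 0 j 0 * v j.
    move=> v hv.
    have [xx [xx' [hc e1 e2]]] := build v hv; have [_ h2] := H xx xx' hc.
    rewrite big_split_ord /=; under eq_bigr do rewrite col_mxEu.
    under [X in _ + X]eq_bigr do rewrite col_mxEd mxE mul0r.
    rewrite big1_eq addr0.
    have -> : \sum_i mu i 0 * v (lshift n i) = \sum_i mu i 0 * xx i 0.
      by apply: eq_bigr => i _; rewrite e1.
    move: h2; rewrite -/mu0; lra.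
  have [w [hw0 [hwc hwb]]] := farkas_aff feasA imp2.
  pose z1 := if 0 <= mu0 then mu0 else 0.
  pose z2 := if 0 <= mu0 then 0 else - mu0.
  have z1ge : 0 <= z1 by rewrite /z1; case: ifP => //; rewrite lexx.
  have z2ge : 0 <= z2 by rewrite /z2; case: ifP => [_|/negbT]; rewrite ?lexx // -ltNge oppr_ge0 => /ltW.
  exists (\col_i y i), (col_mx (col_mx z1%:M z2%:M) (\col_i w i)).
  split; split.
  + by move=> i; rewrite !mxE.
  + apply/matrixP => j k; rewrite ord1 -(hyc j) mxE; apply: eq_bigr => i _; by rewrite !mxE mulrC.
  + rewrite mxE; apply: le_trans hyb _; apply: ler_sum => i _; by rewrite !mxE mulrC.
  + move=> i; rewrite !mxE; case: (split i) => [i1|i2]; rewrite !mxE //.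
    case: (@split 1 1 i1) => k; by rewrite !mxE ord1 eqxx mulr1n.
  + have hAw : A^T *m \col_i w i = col_mx mu 0.
      apply/matrixP => j k; rewrite ord1 -(hwc j) mxE; apply: eq_bigr => i _; by rewrite !mxE mulrC.
    rewrite (Atil_mul A (col_mx z1%:M z2%:M) (\col_i w i)) col_mxKu col_mxKd hAw.
    rewrite colA1 -[mut in RHS]vsubmxK.
    have -> : z1%:M - z2%:M = usubmx mut.
      apply/matrixP => i j; rewrite !ord1 [LHS]mxE !mxE /= !mulr1n maxdiff.
      by rewrite /mu0 mxE.
    by [].
  + rewrite (btil_mul b (col_mx z1%:M z2%:M)) col_mxKu col_mxKd !mxE /= !mulr1n maxdiff.
    rewrite -/mu0.
    have : - mu0 <= \sum_(j < m) b^T 0 j * (\col_i w i) j 0.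
      apply: le_trans hwb _; apply: ler_sum => i _; by rewrite !mxE mulrC.
    lra.
- move=> [y [z [[hy0 hyA hyb] [hz0 hzA hzb]]]] x x' hc; split.
  + have := dual_ineq hy0 hc; rewrite hyA mul_cc.
    under [X in _ <= _ + X -> _]eq_bigr do rewrite mxE mulNr.
    rewrite sumrN; lra.
  + move: hz0 hzA hzb; rewrite -[z]vsubmxK => hz0 hzA hzb.
    rewrite (Atil_mul A (usubmx z : 'cV_(1 + 1)) (dsubmx z)) in hzA.
    rewrite (btil_mul b (usubmx z : 'cV_(1 + 1)) (dsubmx z)) in hzb.
    rewrite -[mut in RHS]vsubmxK -colA1 in hzA; case/eq_col_mx: hzA => h1 h2.
    have hW0 : cvle 0 (dsubmx z).
      move=> i; have := hz0 (rshift 2 i); by rewrite col_mxEd !mxE.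
    have := dual_ineq hW0 hc; rewrite h2 mul_cc.
    under [X in _ <= _ + X -> _]eq_bigr do rewrite mxE mul0r.
    rewrite big1_eq addr0.
    have e : usubmx (usubmx z : 'cV_(1 + 1)) 0 0 - dsubmx (usubmx z : 'cV_(1 + 1)) 0 0 = mu0.
      rewrite /mu0 -h1. by rewrite !mxE.
    lra.
Qed.
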